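(* Let $k\geq 2$ be an integer and let $G$ be a graph on $n$ vertices with minimum degree $\delta(G)=\delta>\frac{(k-1)n}{k}$ and more than one $K_{k+1}$-component. Then (i) $|\mathrm{int}_k(G)|\geq 2\delta-n+2>0$, and (ii) every $K_{k+1}$-component $C$ of $G$ satisfies $|\mathrm{ext}(C)|\leq n-\delta-1$.
   Context: A $K_{k+1}$-walk in $G$ is a sequence of copies of $K_k$ in which consecutive copies lie in a common copy of $K_{k+1}$; its endpoints are then $K_{k+1}$-connected; the equivalence classes of copies of $K_k$ are the $K_{k+1}$-components. The vertices of a component $C$ are the vertices of the copies of $K_k$ in $C$. $\mathrm{int}_k(G)$ is the set of vertices of $G$ that are vertices of more than one $K_{k+1}$-component; $\mathrm{ext}(C)$ is the set of vertices of $C$ that are vertices of no other $K_{k+1}$-component. *)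

(* Defs.v *)
(* A simple graph on a finite vertex type T is a symmetric,
   irreflexive boolean relation e : rel T. *)
From mathcomp Require Import all_boot.
Set Implicit Arguments. Unset Strict Implicit. Unset Printing Implicit Defensive.

Section KComponents.
Variables (T : finType) (e : rel T).

Definition deg (v : T) : nat := #|[set w | e v w]|.

Definition is_clique (A : {set T}) : bool :=
  [forall x in A, forall y in A, (x != y) ==> e x y].

Definition Kcopy (k : nat) (A : {set T}) : bool := is_clique A && (#|A| == k).

Definition Kstep (k : nat) : rel {set T} := fun A B =>
  [&& Kcopy k A, Kcopy k B &
      [exists C : {set T}, [&& Kcopy k.+1 C, A \subset C & B \subset C]]].

Definition Kconn (k : nat) (A B : {set T}) : bool := connect (Kstep k) A B.

(* vertices of the K_{k+1}-component containing the copy A of K_k *)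
Definition comp_vertices (k : nat) (A : {set T}) : {set T} :=
  [set x | [exists B : {set T}, [&& Kcopy k B, Kconn k A B & x \in B]]].

Definition int_k (k : nat) : {set T} :=
  [set x | [exists A : {set T}, exists B : {set T},
     [&& Kcopy k A, Kcopy k B, ~~ Kconn k A B, x \in A & x \in B]]].

Definition ext (k : nat) (A : {set T}) : {set T} :=
  [set x in comp_vertices k A |
     [forall D : {set T}, (Kcopy k D && (x \in D)) ==> Kconn k A D]].

Definition many_components (k : nat) : Prop :=
  exists A B : {set T}, [/\ Kcopy k A, Kcopy k B & ~~ Kconn k A B].

End KComponents.

(* Main.v *)
Require Import Defs.
From mathcomp Require Import all_boot.
From mathcomp Require Import zify.
Set Implicit Arguments. Unset Strict Implicit. Unset Printing Implicit Defensive.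

Lemma Kstep_sym (T : finType) (e : rel T) k : symmetric (Kstep e k).
Proof.
move=> A B; rewrite /Kstep; case: (Kcopy e k A); case: (Kcopy e k B) => //=.
by apply/existsP/existsP => -[C /and3P[H1 H2 H3]]; exists C; rewrite H1 H2 H3.
Qed.

Lemma Kconn_sym (T : finType) (e : rel T) k A B : Kconn e k A B = Kconn e k B A.
Proof. exact: (sym_connect_sym (@Kstep_sym T e k)). Qed.

Lemma Kconn_trans (T : finType) (e : rel T) k A B C :
  Kconn e k A B -> Kconn e k B C -> Kconn e k A C.
Proof. exact: connect_trans. Qed.

Lemma is_cliqueP (T : finType) (e : rel T) (A : {set T}) :
  reflect (forall x y, x \in A -> y \in A -> x != y -> e x y) (is_clique e A).
Proof.
apply: (iffP forallP) => [H x y xA yA xy|H x].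
  by move: (H x); rewrite xA /= => /forallP/(_ y); rewrite yA xy.
by apply/implyP => xA; apply/forallP => y; apply/implyP => yA; apply/implyP; apply: H.
Qed.

Lemma clique_sub (T : finType) (e : rel T) (A B : {set T}) :
  is_clique e A -> B \subset A -> is_clique e B.
Proof.
move=> /is_cliqueP H /subsetP BA; apply/is_cliqueP => x y xB yB; apply: H; exact: BA.
Qed.

Lemma clique_add (T : finType) (e : rel T) (A : {set T}) v :
  symmetric e -> is_clique e A -> (forall a, a \in A -> e a v) -> is_clique e (v |: A).
Proof.
move=> esym /is_cliqueP H Hv; apply/is_cliqueP => x y; rewrite !inE.
case/predU1P => [->|xA]; case/predU1P => [->|yA]; rewrite ?eqxx //.
- by move=> _; rewrite esym; apply: Hv.
- by move=> _; apply: Hv.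
- exact: H.
Qed.

Lemma subset_of_size (T : finType) (S : {set T}) m :
  m <= #|S| -> exists A : {set T}, A \subset S /\ #|A| = m.
Proof.
case/card_geqP => s [us ss sS]; exists [set x in s]; split.
  by apply/subsetP => x; rewrite inE; apply: sS.
by rewrite cardsE; rewrite (card_uniqP us).
Qed.


Lemma card_nn (T : finType) (e : rel T) w :
  #|[set v | ~~ e w v]| + deg e w = #|T|.
Proof.
have -> : [set v | ~~ e w v] = ~: [set v | e w v] by apply/setP => v; rewrite !inE.
by rewrite addnC cardsC.
Qed.

Lemma dcount (T : finType) (e : rel T) (K : {set T}) :
  \sum_(w in K) #|[set v | ~~ e w v]| = \sum_v #|[set w in K | ~~ e w v]|.
Proof.
have E (P : pred T) : #|[set x | P x]| = \sum_x (P x : nat).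
  rewrite -sum1dep_card big_mkcond /=; apply: eq_bigr => x _; by case: (P x).
under eq_bigr => w _ do rewrite E.
under [RHS]eq_bigr => v _ do rewrite E.
rewrite exchange_big /=; apply: eq_bigr => v _.
rewrite big_mkcond /=; apply: eq_bigr => w _; by case: (w \in K).
Qed.

Lemma extend1 (T : finType) (e : rel T) (k delta : nat) (Q : {set T}) :
  irreflexive e -> (forall v, delta <= deg e v) -> k * (#|T| - delta) < #|T| ->
  #|Q| <= k -> exists v, v \notin Q /\ (forall q, q \in Q -> e q v).
Proof.
move=> eirr hdeg hk hQ.
case: (pickP [pred v | [forall q in Q, e q v]]) => [v /= /forall_inP Hv|Hn].
  exists v; split => //; apply/negP => vQ; by move: (Hv v vQ); rewrite eirr.
exfalso.
have H1 : #|T| <= \sum_v #|[set w in Q | ~~ e w v]|.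
  rewrite -sum1_card; apply: leq_sum => v _.
  move: (Hn v) => /= /negbT; rewrite negb_forall_in => /existsP[q /andP[qQ nq]].
  by rewrite card_gt0; apply/set0Pn; exists q; rewrite inE qQ.
have H2 : \sum_(w in Q) #|[set v | ~~ e w v]| <= #|Q| * (#|T| - delta).
  rewrite -sum_nat_const; apply: leq_sum => w _.
  have := card_nn e w; have := hdeg w; lia.
rewrite -dcount in H1.
have H3 : #|Q| * (#|T| - delta) <= k * (#|T| - delta) by apply: leq_mul.
lia.
Qed.

Lemma grow (T : finType) (e : rel T) (k delta : nat) :
  symmetric e -> irreflexive e -> (forall v, delta <= deg e v) -> k * (#|T| - delta) < #|T| ->
  forall m (Q : {set T}), is_clique e Q -> #|Q| + m <= k.+1 ->
  exists K, Kcopy e (#|Q| + m) K /\ Q \subset K.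
Proof.
move=> esym eirr hdeg hk; elim=> [|m IH] Q Qc Qm.
  by exists Q; rewrite addn0 /Kcopy Qc eqxx.
have hQk : #|Q| <= k by lia.
have [v [vQ Hv]] := extend1 eirr hdeg hk hQk.
have Q'c := clique_add esym Qc Hv.
have cQ' : #|v |: Q| = #|Q|.+1 by rewrite cardsU1 vQ.
have hm : #|v |: Q| + m <= k.+1 by rewrite cQ'; lia.
have [K [HK sK]] := IH (v |: Q) Q'c hm.
exists K; split; first by rewrite cQ' addSnnS in HK.
by apply: subset_trans sK; apply: subsetUr.
Qed.


Lemma Kstep_swap (T : finType) (e : rel T) k (K A : {set T}) a a' :
  is_clique e K -> A \subset K -> #|A| = k -> a \in A -> a' \in K -> a' \notin A ->
  Kstep e k A (a' |: (A :\ a)).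
Proof.
move=> Kc AK cA aA a'K a'A.
have cA1 : #|a' |: (A :\ a)| = k.
  rewrite cardsU1 inE negb_and a'A orbT /=; move: (cardsD1 a A); rewrite aA; lia.
have sC : a' |: A \subset K by rewrite subUset sub1set a'K AK.
have cC : #|a' |: A| = k.+1 by rewrite cardsU1 a'A cA.
apply/and3P; split.
- by rewrite /Kcopy (clique_sub Kc AK) cA eqxx.
- rewrite /Kcopy cA1 eqxx andbT; apply: (clique_sub Kc); apply: subset_trans sC.
  by apply: setUS; apply: subD1set.
- apply/existsP; exists (a' |: A); rewrite /Kcopy cC eqxx (clique_sub Kc sC) /=.
  by rewrite subsetUr /=; apply: setUS; apply: subD1set.
Qed.

Lemma within_clique (T : finType) (e : rel T) k (K : {set T}) :
  is_clique e K -> forall m (A A' : {set T}), #|A :\: A'| = m ->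
  A \subset K -> A' \subset K -> #|A| = k -> #|A'| = k -> Kconn e k A A'.
Proof.
move=> Kc; elim=> [|m IH] A A' hm AK A'K cA cA'.
  have sAA' : A \subset A' by rewrite -setD_eq0 -cards_eq0 hm.
  have eAA' : A == A' by rewrite eqEcard sAA' cA cA' leqnn.
  rewrite (eqP eAA'); exact: connect0.
have [a aD] : exists a, a \in A :\: A'.
  by apply/set0Pn; rewrite -cards_eq0 hm.
have [a' aD'] : exists a', a' \in A' :\: A.
  apply/set0Pn; rewrite -cards_eq0.
  have h1 := cardsID A' A; have h2 := cardsID A A'.
  rewrite setIC in h2; lia.
move: aD aD'; rewrite !inE => /andP[aA' aA] /andP[a'A a'A'].
have a'K : a' \in K by apply: (subsetP A'K).
apply: connect_trans (connect1 (Kstep_swap Kc AK cA aA a'K a'A)) _.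
apply: (IH); last 2 first.
- rewrite cardsU1 inE negb_and a'A orbT /=; move: (cardsD1 a A); rewrite aA; lia.
- exact: cA'.
- have -> : (a' |: (A :\ a)) :\: A' = (A :\: A') :\ a.
    apply/setP => x; rewrite !inE; case: (x =P a') => [->|_] /=; last by rewrite andbCA.
    by rewrite a'A' /= andbF.
  move: (cardsD1 a (A :\: A')); rewrite hm !inE aA aA' /=; lia.
- rewrite subUset sub1set a'K /=; apply: subset_trans AK; exact: subD1set.
- exact: A'K.
Qed.


Lemma in_comp (T : finType) (e : rel T) k (B A : {set T}) x :
  Kcopy e k A -> Kconn e k B A -> x \in A -> x \in comp_vertices e k B.
Proof. by move=> hA hBA xA; rewrite inE; apply/existsP; exists A; rewrite hA hBA xA. Qed.

Lemma compL (T : finType) (e : rel T) (k delta : nat) :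
  symmetric e -> irreflexive e -> (forall v, delta <= deg e v) ->
  k * (#|T| - delta) < #|T| -> 0 < k ->
  forall B : {set T}, Kcopy e k B -> #|~: comp_vertices e k B| < #|T| - delta.
Proof.
move=> esym eirr hdeg hk k0 B /andP[Bc /eqP cB].
have hB1 : #|B| + 1 <= k.+1 by lia.
have [K0 [/andP[K0c /eqP cK0] BK0]] := grow esym eirr hdeg hk Bc hB1.
pose P := [pred K : {set T} | is_clique e K && (B \subset K)].
have PK0 : P K0 by rewrite /= K0c BK0.
case: (@arg_maxnP _ K0 P (fun K => #|K|) PK0) => K /andP[Kc BK] Kmax.
set s := #|K|.
have hs : k.+1 <= s by have := Kmax K0 PK0; rewrite cK0 cB addn1.
set M := comp_vertices e k B.
have C1 : forall v, v \notin M -> #|[set w in K | e w v]| < k.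
  move=> v vM; rewrite ltnNge; apply/negP => hS.
  have [A [AS cA]] := subset_of_size hS.
  have AK : A \subset K by apply: subset_trans AS _; apply/subsetP => w; rewrite inE => /andP[].
  have Ac : is_clique e A := clique_sub Kc AK.
  have hBA : Kconn e k B A := within_clique Kc (erefl _) BK AK cB cA.
  have [a aA] : exists a, a \in A by apply/set0Pn; rewrite -cards_eq0 cA; lia.
  have Av : forall w, w \in A -> e w v by move=> w /(subsetP AS); rewrite inE => /andP[].
  have vA : v \notin A by apply/negP => /Av; rewrite eirr.
  have K'c := clique_add esym Ac Av.
  have hst := Kstep_swap K'c (subsetUr _ _) cA aA (setU11 _ _) vA.
  have /andP[_ /andP[hA1 _]] := hst.
  have : v \in M.
    apply: (in_comp hA1 (connect_trans hBA (connect1 hst))).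
    by rewrite setU11.
  by rewrite (negbTE vM).
have C2 : forall v, 0 < #|[set w in K | ~~ e w v]|.
  move=> v; case vK: (v \in K).
    by rewrite card_gt0; apply/set0Pn; exists v; rewrite inE vK eirr.
  rewrite lt0n; apply/negP => /eqP /cards0_eq H.
  have Hv : forall w, w \in K -> e w v.
    move=> w wK; apply/negPn/negP => nw.
    have : w \in [set w in K | ~~ e w v] by rewrite inE wK nw.
    by rewrite H inE.
  have Pv : P (v |: K) by rewrite /= (clique_add esym Kc Hv) (subset_trans BK (subsetUr _ _)).
  have := Kmax _ Pv; rewrite cardsU1 vK; rewrite /s; lia.
have C3 : forall v, #|[set w in K | ~~ e w v]| + #|[set w in K | e w v]| = s.
  move=> v; rewrite /s -(cardsID [set w | e w v] K) addnC.
  have -> : [set w in K | ~~ e w v] = K :\: [set w | e w v] by apply/setP => w; rewrite !inE andbC.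
  have -> : [set w in K | e w v] = K :&: [set w | e w v] by apply/setP => w; rewrite !inE.
  by [].
have Hlow : \sum_v (1 + (v \notin M) * (s - k)) <= \sum_v #|[set w in K | ~~ e w v]|.
  apply: leq_sum => v _; case vM: (v \in M) => /=; first by rewrite mul0n addn0 C2.
  have := C1 v (negbT vM); have := C3 v; lia.
have Hsum : \sum_v (1 + (v \notin M) * (s - k)) = #|T| + #|~: M| * (s - k).
  rewrite big_split /= sum1_card; congr (_ + _).
  rewrite -sum_nat_const [RHS]big_mkcond; apply: eq_bigr => v _; rewrite in_setC.
  by case: (v \notin M); rewrite ?mul1n ?mul0n.
have Hup : \sum_(w in K) #|[set v | ~~ e w v]| <= s * (#|T| - delta).
  rewrite -sum_nat_const; apply: leq_sum => w _.
  have := card_nn e w; have := hdeg w; lia.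
rewrite -dcount Hsum in Hlow.
set u := #|~: M| in Hlow *.
set c := #|T| - delta in Hup hk *.
rewrite ltnNge; apply/negP => hcu.
have h1 : c * (s - k) <= u * (s - k) by apply: leq_mul.
have h2 : s * c = k * c + (s - k) * c by rewrite -mulnDl subnKC //; lia.
have := leq_trans Hlow Hup; rewrite h2 (mulnC (s - k)); lia.
Qed.


Lemma notint (T : finType) (e : rel T) k x :
  x \notin int_k e k -> forall A B, Kcopy e k A -> Kcopy e k B -> x \in A -> x \in B ->
  Kconn e k A B.
Proof.
move=> xi A B hA hB xA xB; apply/negPn/negP => nAB; move/negP: xi; apply.
by rewrite inE; apply/existsP; exists A; apply/existsP; exists B; rewrite hA hB nAB xA xB.
Qed.

Unset Implicit Arguments.

Theorem lemma6p2 (T : finType) (e : rel T) (k delta : nat) :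
  symmetric e -> irreflexive e -> 2 <= k ->
  (forall v : T, delta <= deg e v) -> (exists v : T, deg e v = delta) ->
  (k - 1) * #|T| < k * delta ->
  many_components e k ->
  ((#|T| < 2 * delta + 2) /\ (2 * delta + 2 <= #|int_k e k| + #|T|)) /\
  (forall A : {set T}, Kcopy e k A -> #|ext e k A| + delta + 1 <= #|T|).
Proof.
move=> esym eirr k2 hdeg [v0 hv0] hkn [A1 [A2 [hA1 hA2 hn12]]].
have hnn : forall v, #|[set w | ~~ e v w]| + deg e v = #|T| := card_nn e.
have hnn1 : forall v, 0 < #|[set w | ~~ e v w]|.
  by move=> v; rewrite card_gt0; apply/set0Pn; exists v; rewrite inE eirr.
have dN : delta < #|T| by have := hnn v0; have := hnn1 v0; lia.
have hk : k * (#|T| - delta) < #|T|.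
  have e1 : k * (#|T| - delta) = k * #|T| - k * delta by rewrite mulnBr.
  have e2 : (k - 1) * #|T| = k * #|T| - #|T| by rewrite mulnBl mul1n.
  have e3 : k * delta <= k * #|T| by rewrite leq_mul2l ltnW ?orbT.
  rewrite e1; rewrite e2 in hkn; lia.
have k0 : 0 < k by lia.
have partii : forall A : {set T}, Kcopy e k A -> #|ext e k A| + delta + 1 <= #|T|.
  move=> A hA.
  have [B [hB nAB]] : exists B, Kcopy e k B /\ ~~ Kconn e k A B.
    case hAA1: (Kconn e k A A1); last by exists A1; split; rewrite ?hAA1.
    exists A2; split => //; apply/negP => hAA2; move/negP: hn12; apply.
    have hA1A : Kconn e k A1 A by rewrite Kconn_sym.
    exact: Kconn_trans hA1A hAA2.
  have sub : ext e k A \subset ~: comp_vertices e k B.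
    apply/subsetP => x; rewrite !inE => /andP[_ /forallP hx].
    apply/negP => /existsP[D /and3P[hD hBD xD]].
    have := hx D; rewrite hD xD /= => hAD.
    have hDB : Kconn e k D B by rewrite Kconn_sym.
    move/negP: nAB; apply; exact: Kconn_trans hAD hDB.
  have := compL esym eirr hdeg hk k0 hB.
  have := subset_leq_card sub; lia.
split; last exact: partii.
split.
  have : 2 * (#|T| - delta) <= k * (#|T| - delta) by apply: leq_mul.
  lia.
set X := ~: int_k e k.
have cX : #|int_k e k| + #|X| = #|T| := cardsC _.
case: (set_0Vmem X) => [X0|[x1 x1X]].
  by rewrite X0 cards0 in cX; lia.
have x1i : x1 \notin int_k e k by move: x1X; rewrite inE.
have [A [hA x1A]] : exists A, Kcopy e k A /\ x1 \in A.
  have c1 : is_clique e [set x1] by apply/is_cliqueP => x y; rewrite !inE => /eqP-> /eqP->; rewrite eqxx.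
  have h1 : #|[set x1]| + (k - 1) <= k.+1 by rewrite cards1; lia.
  have [K [hK sK]] := grow esym eirr hdeg hk c1 h1.
  exists K; split; first by rewrite cards1 subnKC in hK.
  by apply: (subsetP sK); rewrite inE.
have x1e : x1 \in ext e k A.
  rewrite inE; apply/andP; split; first exact: (in_comp hA (connect0 _ _) x1A).
  apply/forallP => D; apply/implyP => /andP[hD x1D]; exact: (@notint T e k x1 x1i A D hA hD x1A x1D).
have sub : X \subset ext e k A :|: [set w | ~~ e x1 w].
  apply/subsetP => x xX; rewrite in_setU; case ex: (e x1 x); last by apply/orP; right; rewrite inE ex.
  apply/orP; left.
  have xi : x \notin int_k e k by move: xX; rewrite inE.
  have xx1 : x != x1 by apply/negP => /eqP ee; rewrite ee eirr in ex.
  have c2 : is_clique e (x1 |: [set x]).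
    apply: clique_add => //; first by apply/is_cliqueP => a b; rewrite !inE => /eqP-> /eqP->; rewrite eqxx.
    by move=> a; rewrite inE => /eqP->; rewrite esym.
  have c12 : #|x1 |: [set x]| = 2 by rewrite cardsU1 cards1 inE eq_sym xx1.
  have h2 : #|x1 |: [set x]| + (k - 2) <= k.+1 by rewrite c12; move: k2; clear; lia.
  have [Bx [hBx sBx]] := grow esym eirr hdeg hk c2 h2.
  have cB : #|x1 |: [set x]| + (k - 2) = k by rewrite c12; move: k2; clear; lia.
  rewrite cB in hBx.
  have x1B : x1 \in Bx by apply: (subsetP sBx); rewrite setU11.
  have xB : x \in Bx by apply: (subsetP sBx); rewrite !inE eqxx orbT.
  have hABx := notint x1i hA hBx x1A x1B.
  rewrite inE; apply/andP; split; first exact: (in_comp hBx hABx xB).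
  apply/forallP => D; apply/implyP => /andP[hD xD].
  exact: connect_trans hABx (notint xi hBx hD xB xD).
have hI : 1 <= #|ext e k A :&: [set w | ~~ e x1 w]|.
  by rewrite card_gt0; apply/set0Pn; exists x1; rewrite in_setI x1e inE eirr.
have h1 := subset_leq_card sub; rewrite cardsU in h1.
have h2 := partii A hA; have h3 := hnn x1; have h4 := hdeg x1.
move: h1 h2 h3 h4 hI cX.
move: (#|ext e k A|) (#|[set w | ~~ e x1 w]|) (#|ext e k A :&: [set w | ~~ e x1 w]|) (#|X|) (#|int_k e k|) (deg e x1) (#|T|).
clear; lia.
Qed.
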